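(* Suppose the sequence $\{\mathcal{G}[k]\}_{k\ge0}$ satisfies the joint strong-connectivity assumption with parameter $T$. Then for every substate $j\in\{1,\dots,N\}$, under the freshness-index rules, $\tau^{(j)}_i[k]\neq\omega$ for all $k\ge (N-1)T$ and all $i\in\mathcal{V}$.
   Context: Graphs. Nodes $\mathcal{V}=\{1,\dots,N\}$. At each time $k\in\mathbb{N}=\{0,1,2,\dots\}$ there is a directed graph $\mathcal{G}[k]=(\mathcal{V},\mathcal{E}[k])$; $(i,j)\in\mathcal{E}[k]$ means node $i$ can send information to node $j$ at time $k$. $\mathcal{N}_i[k]=\{l\neq i:(l,i)\in\mathcal{E}[k]\}$ is the set of neighbors of $i$ at time $k$. The union graph over an interval of times has vertex set $\mathcal{V}$ and edge set the union of the edge sets over that interval. Joint strong-connectivity assumption: there is $T\in\mathbb{N}_+=\{1,2,\dots\}$ such that for every $k\in\mathbb{N}$ the union graph over $[kT,(k+1)T)$ is strongly connected. Freshness indices. For each substate index $j\in\{1,\dots,N\}$ (node $j$ being the source node of substate $j$) and node $i$, node $i$ keeps $\tau^{(j)}_i[k]\in\{\omega\}\cup\mathbb{N}$, where $\omega$ is a special symbol. Initialization: $\tau^{(j)}_j[0]=0$, $\tau^{(j)}_i[0]=\omega$ for $i\neq j$. The source keeps $\tau^{(j)}_j[k]=0$ for all $k$. For $i\neq j$, let $\mathcal{M}^{(j)}_i[k]=\{l\in\mathcal{N}_i[k]:\tau^{(j)}_l[k]\neq\omega\}$. Case 1, $\tau^{(j)}_i[k]=\omega$: if $\mathcal{M}^{(j)}_i[k]\neq\emptyset$,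 let $u$ be any minimizer of $\tau^{(j)}_l[k]$ over $l\in\mathcal{M}^{(j)}_i[k]$ and set $\tau^{(j)}_i[k+1]=\tau^{(j)}_u[k]+1$; otherwise set $\tau^{(j)}_i[k+1]=\omega$. Case 2, $\tau^{(j)}_i[k]\neq\omega$: let $\mathcal{F}^{(j)}_i[k]=\{l\in\mathcal{M}^{(j)}_i[k]:\tau^{(j)}_l[k]<\tau^{(j)}_i[k]\}$; if nonempty, let $u$ be any minimizer of $\tau^{(j)}_l[k]$ over $\mathcal{F}^{(j)}_i[k]$ and set $\tau^{(j)}_i[k+1]=\tau^{(j)}_u[k]+1$; otherwise set $\tau^{(j)}_i[k+1]=\tau^{(j)}_i[k]+1$. *)

(* Defs.v *)
(* Nodes V = {1..N} are modelled by 'I_N; omega is None. *)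
From mathcomp Require Import all_boot.
Set Implicit Arguments. Unset Strict Implicit. Unset Printing Implicit Defensive.

(* A time-varying digraph: E k l i = true iff (l,i) is an edge at time k,
   i.e. node l can send information to node i at time k. *)
Definition graph_seq (N : nat) := nat -> rel 'I_N.

Definition nbr N (E : graph_seq N) (k : nat) (i l : 'I_N) : bool :=
  (l != i) && E k l i.

Definition union_graph N (E : graph_seq N) (T k : nat) : rel 'I_N :=
  fun a b => [exists t : 'I_T, E (k * T + t) a b].

Definition strongly_connected N (e : rel 'I_N) : Prop :=
  forall a b : 'I_N, connect e a b.

Definition joint_strong_connectivity N (E : graph_seq N) (T : nat) : Prop :=
  0 < T /\ forall k, strongly_connected (union_graph E T k).

(* One update step of node i (i <> source) at time k, given the current
   indices tk and the next value next. "Any minimizer u" is rendered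
   existentially; the resulting value tau_u+1 does not depend on the choice. *)
Definition fresh_step N (E : graph_seq N) (k : nat) (tk : 'I_N -> option nat)
  (i : 'I_N) (next : option nat) : Prop :=
  match tk i with
  | None =>
      (exists u n, nbr E k i u /\ tk u = Some n /\
         (forall l m, nbr E k i l -> tk l = Some m -> n <= m) /\
         next = Some n.+1)
      \/ ((forall l, nbr E k i l -> tk l = None) /\ next = None)
  | Some t =>
      (exists u n, nbr E k i u /\ tk u = Some n /\ n < t /\
         (forall l m, nbr E k i l -> tk l = Some m -> m < t -> n <= m) /\
         next = Some n.+1)
      \/ ((forall l m, nbr E k i l -> tk l = Some m -> t <= m) /\
          next = Some t.+1)
  end.

Definition freshness_traj N (E : graph_seq N) (j : 'I_N)
  (tau : nat -> 'I_N -> option nat) : Prop :=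
  (forall i, tau 0 i = if i == j then Some 0 else None) /\
  (forall k, tau k j = Some 0) /\
  (forall k i, i != j -> fresh_step E k (tau k) i (tau k.+1 i)).

(* Main.v *)
Require Import Defs.
From mathcomp Require Import all_boot.
From mathcomp Require Import zify.
Set Implicit Arguments. Unset Strict Implicit.

Lemma cut_edge (n : nat) (e : rel 'I_n) (A : {set 'I_n}) x y :
  connect e x y -> x \in A -> y \notin A ->
  exists a b, [/\ a \in A, b \notin A & e a b].
Proof.
move=> /connectP [p Hp ->]; elim: p x Hp => [|z p IH] x /=.
  by move=> _ ->.
move=> /andP [exz Hp] xA ylast.
case zA: (z \in A).
  exact: IH Hp zA ylast.
by exists x, z; rewrite zA.
Qed.

Section Proof.
Variables (N T : nat) (E : graph_seq N) (j : 'I_N) (tau : nat -> 'I_N -> option nat).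
Hypothesis Htr : freshness_traj E j tau.

Lemma mono1 k i : tau k i <> None -> tau k.+1 i <> None.
Proof.
case: Htr => _ [Hj Hs] H; move: H.
case: (eqVneq i j) => [->|ne]; first by rewrite !Hj => _.
have := Hs k i ne; rewrite /fresh_step.
case: (tau k i) => [t|//] H2 _.
by case: H2 => [[u [n [_ [_ [_ [_ ->]]]]]]|[_ ->]].
Qed.

Lemma mono k k' i : k <= k' -> tau k i <> None -> tau k' i <> None.
Proof.
move=> /subnK <-; elim: (k' - k) => [|d IH] //= H.
by rewrite addSn; apply: mono1; apply: IH.
Qed.

Lemma step_in k a b : tau k a <> None -> a != b -> E k a b -> tau k.+1 b <> None.
Proof.
move=> Ha ab Eab.
case Hb: (tau k b) => [t|]; first by apply: mono1; rewrite Hb.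
case: Htr => _ [Hj Hs].
case: (eqVneq b j) => [bj|ne]; first by rewrite bj Hj in Hb.
have := Hs k b ne; rewrite /fresh_step Hb.
case=> [[u [n [_ [_ [_ ->]]]]]//|[Hall _]].
exfalso; apply: Ha; apply: Hall; by rewrite /nbr Eab andbT.
Qed.

Definition S k := [set i | tau k i != None].

Hypothesis Hjsc : joint_strong_connectivity E T.

Lemma growth m : minn N m.+1 <= #|S (m * T)|.
Proof.
case: Hjsc => T0 Hsc.
have jS : forall k, j \in S k by move=> k; rewrite inE; case: Htr => _ [-> _].
elim: m => [|m IH].
  rewrite mul0n; apply: leq_trans (geq_minr _ _) _.
  by rewrite card_gt0; apply/set0Pn; exists j.
have sub : S (m * T) \subset S (m.+1 * T).
  apply/subsetP => i; rewrite !inE => /eqP Hi; apply/eqP.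
  by apply: (mono _ Hi); rewrite mulSn; lia.
case: (boolP (S (m * T) == setT)) => [/eqP full|].
  have : S (m.+1 * T) = setT.
    by apply/eqP; rewrite eqEsubset subsetT /= -full.
  by move=> ->; rewrite cardsT card_ord geq_minl.
move=> /negP nf.
have [b bS] : exists b, b \notin S (m * T).
  case: (pickP [pred b | b \notin S (m * T)]) => [b Hb|H]; first by exists b.
  exfalso; apply: nf; apply/eqP; apply/setP => i; rewrite !inE.
  by move: (H i); rewrite /= !inE; case: (tau _ i).
have [a [b' [aS bS' /existsP [t Et]]]] :=
  cut_edge (Hsc m j b) (jS (m * T)) bS.
have ab : a != b' by apply/eqP => eab; move: bS'; rewrite -eab aS.
have Ha : tau (m * T + t) a <> None.
  by apply: (mono (k := m * T)); [lia | move: aS; rewrite inE => /eqP].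
have Hb := step_in Ha ab Et.
have Hb2 : b' \in S (m.+1 * T).
  rewrite inE; apply/eqP; apply: (mono _ Hb).
  by have := ltn_ord t; rewrite mulSn; lia.
have : #|b' |: S (m * T)| <= #|S (m.+1 * T)|.
  apply: subset_leq_card; apply/subsetP => i; rewrite in_setU1.
  by case/orP => [/eqP ->//|]; apply: (subsetP sub).
rewrite cardsU1 bS' => H.
apply: leq_trans H; move: IH; rewrite /minn. rewrite add1n; set c := #|S _|. case: ifP => h1; case: ifP => h2; lia.
Qed.

End Proof.

Theorem lemma3 (N T : nat) (E : graph_seq N) :
  joint_strong_connectivity E T ->
  forall (j : 'I_N) (tau : nat -> 'I_N -> option nat),
    freshness_traj E j tau ->
    forall k : nat, (N - 1) * T <= k -> forall i : 'I_N, tau k i <> None.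
Proof.
move=> Hjsc j tau Htr k Hk i.
have Hg := growth Htr Hjsc (N - 1).
have full : S tau ((N - 1) * T) = setT.
  apply/eqP; rewrite eqEcard subsetT cardsT card_ord /=.
  apply: leq_trans Hg; have := ltn_ord j; rewrite /minn; case: ifP => h1; lia.
have : i \in S tau ((N - 1) * T) by rewrite full inE.
rewrite inE => /eqP H; exact: (mono Htr Hk H).
Qed.
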